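(* Let $G$ be a daisy cube and let $P=v_1,v_2,v_3,v_4$ be a path on four vertices in $G$. Then $v_1$ and $v_3$ have a common neighbour different from $v_2$, or $v_2$ and $v_4$ have a common neighbour different from $v_3$.
   Context: For $B=\{0,1\}$ order $B^n$ componentwise: $u\le v$ iff $u_i\le v_i$ for all $i$. The hypercube $Q_n$ has vertex set $B^n$, two strings adjacent iff they differ in exactly one position. For $X\subseteq B^n$, $Q_n(X)$ is the subgraph of $Q_n$ induced by $\{u\in B^n: u\le x\text{ for some }x\in X\}$; a daisy cube is a graph of the form $Q_n(X)$. *)

(* Defs.v *)
From mathcomp Require Import all_boot all_order.
Set Implicit Arguments. Unset Strict Implicit. Unset Printing Implicit Defensive.

Definition bstr (n : nat) := {ffun 'I_n -> bool}.

Definition ble n (u v : bstr n) : bool := [forall i, u i <= v i].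

Definition qadj n (u v : bstr n) : bool := #|[set i | u i != v i]| == 1.

(* vertex set of the daisy cube Q_n(X): the down-closure of X *)
Definition daisy n (X : {set bstr n}) : {set bstr n} :=
  [set u | [exists x in X, ble u x]].

(* Main.v *)
Require Import Defs.
From mathcomp Require Import all_boot all_order.

Lemma qadjP n (u v : bstr n) : qadj u v -> exists i, forall x, (u x != v x) = (x == i).
Proof.
rewrite /qadj => /cards1P [i Hi]; exists i => x.
by move/setP: Hi => /(_ x); rewrite !inE.
Qed.

Lemma qadjI n (u v : bstr n) i : (forall x, (u x != v x) = (x == i)) -> qadj u v.
Proof.
move=> H; rewrite /qadj (_ : [set x | _] = [set i]) ?cards1 //.
by apply/setP=> x; rewrite !inE H.
Qed.

Lemma daisy_down n X (w u : bstr n) : ble w u -> u \in daisy X -> w \in daisy X.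
Proof.
rewrite !inE => Hwu /existsP[y /andP[Hy Huy]]; apply/existsP; exists y.
rewrite Hy /=; apply/forallP => z; exact: leq_trans (forallP Hwu z) (forallP Huy z).
Qed.

Arguments daisy_down {n X w u}.

Lemma neqF (a b : bool) : (a != b) = false -> a = b.
Proof. by case: a; case: b. Qed.

Lemma square n X (u m v : bstr n) : u \in daisy X -> v \in daisy X -> u != v ->
  qadj u m -> qadj m v -> ~~ (ble m u && ble m v) ->
  exists w, [/\ w \in daisy X, qadj u w, qadj w v & w != m].
Proof.
move=> Du Dv Nuv /qadjP[i Hi] /qadjP[j Hj] Hm.
have Nij : i != j.
  apply: contraNneq Nuv => eij; apply/eqP/ffunP => x.
  have := Hi x; have := Hj x; rewrite -eij; case: (x == i);
  by case: (u x); case: (m x); case: (v x).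
have Ui : u i != m i by rewrite Hi.
have Vj : m j != v j by rewrite Hj.
have Uj : u j = m j by apply: neqF; rewrite Hi eq_sym (negbTE Nij).
have Vi : m i = v i by apply: neqF; rewrite Hj (negbTE Nij).
have Ux z : z != i -> u z = m z by move=> h; apply: neqF; rewrite Hi (negbTE h).
have Vx z : z != j -> m z = v z by move=> h; apply: neqF; rewrite Hj (negbTE h).
set w : bstr n := [ffun x => if x == j then v x else u x].
exists w; split.
- move: Hm; rewrite negb_and !negb_forall => /orP[/existsP[x Hx]|/existsP[x Hx]].
  + have ex : x = i.
      apply/eqP; rewrite -Hi; move: Hx; by case: (m x); case: (u x).
    subst x; apply: (daisy_down _ Dv); apply/forallP => z; rewrite ffunE.
    case: eqP => [_|/eqP nzj]; first exact: leqnn.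
    case: (eqVneq z i) => [->|nzi].
      by move: Hx; rewrite -Vi; case: (m i); case: (u i).
    by rewrite Ux // Vx.
  + have ex : x = j.
      apply/eqP; rewrite -Hj; move: Hx; by case: (m x); case: (v x).
    subst x; apply: (daisy_down _ Du); apply/forallP => z; rewrite ffunE.
    case: eqP => [->|/eqP nzj]; last exact: leqnn.
    by move: Hx; rewrite Uj; case: (m j); case: (v j).
- apply: (@qadjI _ _ _ j) => x; rewrite ffunE.
  case: (eqVneq x j) => [->|nxj]; first by rewrite Uj.
  by rewrite eqxx.
- apply: (@qadjI _ _ _ i) => x; rewrite ffunE.
  case: (eqVneq x j) => [->|nxj]; first by rewrite eqxx eq_sym (negbTE Nij).
  case: (eqVneq x i) => [->|nxi]; first by rewrite -Vi Ui.
  by rewrite Ux // Vx // eqxx.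
- apply/negP => /eqP /ffunP /(_ j); rewrite ffunE eqxx => h.
  by move: Vj; rewrite h eqxx.
Qed.

Lemma ble_anti n (u v : bstr n) : ble u v -> ble v u -> u = v.
Proof.
move=> /forallP h1 /forallP h2; apply/ffunP => x.
by move: (h1 x) (h2 x); case: (u x); case: (v x).
Qed.

Theorem lemma4p11 (n : nat) (X : {set bstr n}) (v1 v2 v3 v4 : bstr n) :
  v1 \in daisy X -> v2 \in daisy X -> v3 \in daisy X -> v4 \in daisy X ->
  uniq [:: v1; v2; v3; v4] ->
  qadj v1 v2 -> qadj v2 v3 -> qadj v3 v4 ->
  (exists w, [/\ w \in daisy X, qadj v1 w, qadj w v3 & w != v2]) \/
  (exists w, [/\ w \in daisy X, qadj v2 w, qadj w v4 & w != v3]).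
Proof.
move=> D1 D2 D3 D4 U A12 A23 A34.
have N13 : v1 != v3 by apply/eqP => e; move: U; rewrite e /= !inE eqxx /= ?orbT.
have N24 : v2 != v4 by apply/eqP => e; move: U; rewrite e /= !inE eqxx /= ?orbT /= ?andbF.
case H1: (ble v2 v1 && ble v2 v3); last first.
  by left; apply: square => //; rewrite H1.
case H2: (ble v3 v2 && ble v3 v4); last first.
  by right; apply: square => //; rewrite H2.
move/andP: H1 => [_ h1]; move/andP: H2 => [h2 _].
by move: U; rewrite (@ble_anti _ _ _ h1 h2) /= !inE eqxx /= ?orbT ?andbF.
Qed.
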